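(* Let $\mathcal H$ be a complex Hilbert space, let $a \in (\tfrac12, \infty) \setminus \{1\}$, and let $X, Y$ be finite-dimensional subspaces of $\mathcal H$ with $S_a(X,Y) \ne \emptyset$. Then there exists $k \in \mathbb N \cup \{0\}$, $k \le \dim \mathcal H$, such that $\dim X = \dim Y = k$ and $\dim Z = k$ for every $Z \in S_a(X,Y)$.
   Context: For a closed subspace $X$ of $\mathcal H$, $P_X$ is the orthogonal projection onto $X$. For finite-dimensional subspaces $X,Y$ and $a\in\mathbb R$, $S_a(X,Y)$ denotes the set of all finite-dimensional subspaces $Z$ of $\mathcal H$ such that $a(P_X+P_Y)+(1-2a)P_Z$ is a finite-rank (self-adjoint, idempotent) projection. *)

(* Defs.v *)
From mathcomp Require Import all_boot all_algebra.
From mathcomp Require Import complex reals.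
Set Implicit Arguments. Unset Strict Implicit. Unset Printing Implicit Defensive.
Import GRing.Theory Num.Theory.
Local Open Scope ring_scope.
Local Open Scope complex_scope.

Section Hilbert.
Variables (R : realType) (V : lmodType R[i]) (ip : V -> V -> R[i]).

Definition is_inner_product : Prop :=
  [/\ (forall (c : R[i]) (u v w : V), ip (c *: u + v) w = c * ip u w + ip v w),
      (forall u v : V, ip u v = (ip v u)^*),
      (forall v : V, 0 <= ip v v) &
      (forall v : V, ip v v = 0 -> v = 0)].

(* completeness w.r.t. the norm ||v||^2 = <v,v> (stated with squared norms) *)
Definition is_complete : Prop :=
  forall u : nat -> V,
    (forall e : R, 0 < e -> exists N : nat, forall m n : nat,
        (N <= m)%N -> (N <= n)%N -> ip (u m - u n) (u m - u n) < e%:C) ->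
    exists l : V, forall e : R, 0 < e -> exists N : nat, forall n : nat,
        (N <= n)%N -> ip (u n - l) (u n - l) < e%:C.

Definition lin_indep (k : nat) (b : 'I_k -> V) : Prop :=
  forall c : 'I_k -> R[i], \sum_(i < k) c i *: b i = 0 -> forall i, c i = 0.

Definition has_dim (X : V -> Prop) (k : nat) : Prop :=
  exists b : 'I_k -> V, lin_indep b /\
    (forall v : V, X v <-> exists c : 'I_k -> R[i], v = \sum_(i < k) c i *: b i).

Definition fin_dim_subspace (X : V -> Prop) : Prop := exists k, has_dim X k.

Definition is_orth_proj (X : V -> Prop) (P : V -> V) : Prop :=
  forall v : V, X (P v) /\ (forall x : V, X x -> ip (v - P v) x = 0).

Definition is_fr_projection (T : V -> V) : Prop :=
  [/\ (forall v, T (T v) = T v),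
      (forall u v, ip (T u) v = ip u (T v)) &
      exists k, has_dim (fun w => exists v, w = T v) k].

Definition S_a (a : R) (X Y Z : V -> Prop) : Prop :=
  fin_dim_subspace Z /\
  exists PX PY PZ : V -> V,
    [/\ is_orth_proj X PX, is_orth_proj Y PY, is_orth_proj Z PZ &
        is_fr_projection
          (fun v => a%:C *: (PX v + PY v) + (1 - 2 * a)%:C *: PZ v)].

End Hilbert.

(* Main.v *)
Require Import Defs.
From mathcomp Require Import all_boot all_algebra.
From mathcomp Require Import complex reals.
From mathcomp Require Import ring lra.
From Stdlib Require Import IndefiniteDescription.
Set Implicit Arguments. Unset Strict Implicit. Unset Printing Implicit Defensive.
Import GRing.Theory Num.Theory.
Local Open Scope ring_scope.
Local Open Scope complex_scope.

Section Basics.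
Variables (R : realType) (V : lmodType R[i]) (ip : V -> V -> R[i]).
Hypothesis Hip : is_inner_product ip.

Lemma ipDl u v w : ip (u + v) w = ip u w + ip v w.
Proof. by case: Hip => H _ _ _; have := H 1 u v w; rewrite scale1r mul1r. Qed.

Lemma ip0l w : ip 0 w = 0.
Proof.
have h := ipDl 0 0 w; rewrite addr0 in h.
by apply: (@addrI _ (ip 0 w)); rewrite addr0 -h.
Qed.

Lemma ipZl c u w : ip (c *: u) w = c * ip u w.
Proof. by case: Hip => H _ _ _; have := H c u 0 w; rewrite addr0 ip0l addr0. Qed.

Lemma ipNl u w : ip (- u) w = - ip u w.
Proof. by rewrite -scaleN1r ipZl mulN1r. Qed.

Lemma ipBl u v w : ip (u - v) w = ip u w - ip v w.
Proof. by rewrite ipDl ipNl. Qed.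

Lemma ipC u v : ip u v = (ip v u)^*.
Proof. by case: Hip. Qed.

Lemma ipDr u v w : ip u (v + w) = ip u v + ip u w.
Proof. by rewrite ipC ipDl rmorphD /= -!ipC. Qed.

Lemma ipZr c u v : ip u (c *: v) = c^* * ip u v.
Proof. by rewrite ipC ipZl rmorphM /= -ipC. Qed.

Lemma ip0r u : ip u 0 = 0.
Proof. by rewrite ipC ip0l conjc0. Qed.

Lemma ipNr u w : ip u (- w) = - ip u w.
Proof. by rewrite ipC ipNl rmorphN /= -ipC. Qed.

Lemma ipBr u v w : ip u (v - w) = ip u v - ip u w.
Proof. by rewrite ipDr ipNr. Qed.

Lemma ip_ge0 v : 0 <= ip v v.
Proof. by case: Hip. Qed.

Lemma ip_eq0 v : ip v v = 0 -> v = 0.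
Proof. by case: Hip => _ _ _; apply. Qed.

Definition nr v := complex.Re (ip v v).

Lemma ipE v : ip v v = (nr v)%:C.
Proof.
have h := ger0_Im (ip_ge0 v).
by rewrite [LHS]complexE h mulr0 addr0.
Qed.

Lemma nr_ge0 v : 0 <= nr v.
Proof. by rewrite -ler0c -ipE ip_ge0. Qed.

Lemma nr_eq0 v : nr v = 0 -> v = 0.
Proof. by move=> h; apply: ip_eq0; rewrite ipE h. Qed.

Lemma ip_ext u v : (forall w, ip u w = ip v w) -> u = v.
Proof.
move=> h; apply/eqP; rewrite -subr_eq0; apply/eqP/ip_eq0.
by rewrite ipBl h subrr.
Qed.

Definition sproj (L : V -> V) :=
  (forall v, L (L v) = L v) /\ (forall u v, ip (L u) v = ip u (L v)).

Section Sproj.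
Variable L : V -> V.
Hypothesis HL : sproj L.

Lemma sproj_lin c u v : L (c *: u + v) = c *: L u + L v.
Proof.
case: HL => _ H; apply: ip_ext => w.
by rewrite H ipDl ipZl ipDl ipZl !H.
Qed.

Lemma sproj_add u v : L (u + v) = L u + L v.
Proof. by rewrite -[u]scale1r sproj_lin !scale1r. Qed.

Lemma sproj0 : L 0 = 0.
Proof.
have h := sproj_add 0 0; rewrite addr0 in h.
by apply: (@addrI _ (L 0)); rewrite addr0 -h.
Qed.

Lemma sproj_scale c u : L (c *: u) = c *: L u.
Proof. by have := sproj_lin c u 0; rewrite !addr0 sproj0 addr0. Qed.

Lemma sproj_sum k (c : 'I_k -> R[i]) (b : 'I_k -> V) :
  L (\sum_(i < k) c i *: b i) = \sum_(i < k) c i *: L (b i).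
Proof.
rewrite (big_morph L sproj_add sproj0); apply: eq_bigr => i _.
by rewrite sproj_scale.
Qed.

Lemma sproj_ipn v : ip (L v) v = ip (L v) (L v).
Proof. by case: HL => H1 H2; rewrite H2 [RHS]H2 H1. Qed.

Lemma sproj_orth v u : ip (v - L v) (L u) = 0.
Proof.
case: HL => H1 H2; rewrite -H2.
have -> : L (v - L v) = 0.
  by rewrite -scaleN1r addrC sproj_lin H1 scaleN1r addNr.
by rewrite ip0l.
Qed.

Lemma sproj_nr v : nr (L v) <= nr v.
Proof.
have e : v = L v + (v - L v) by rewrite addrC subrK.
have o1 : ip (v - L v) (L v) = 0 := sproj_orth v v.
have o2 : ip (L v) (v - L v) = 0 by rewrite ipC o1 conjc0.
move: (v - L v) e o1 o2 => w e o1 o2.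
have h : ip v v = ip (L v) (L v) + ip w w.
  rewrite {1 2}e ipDl !ipDr o1 o2.
  by rewrite addr0 add0r.
rewrite !ipE in h.
have := nr_ge0 w.
move: h; rewrite -rmorphD /= => /complexI ->.
lra.
Qed.


Lemma sproj_comb k (c : 'rV_k) (b : 'I_k -> V) :
  L (\sum_(i < k) c 0 i *: b i) = \sum_(i < k) c 0 i *: L (b i).
Proof. exact: sproj_sum. Qed.

End Sproj.

Definition comb k (b : 'I_k -> V) (c : 'rV[R[i]]_k) : V :=
  \sum_(i < k) c 0 i *: b i.

Lemma comb_mul m k (e : 'I_k -> V) (c : 'rV_m) (M : 'M_(m, k)) :
  comb e (c *m M) = \sum_(i < m) c 0 i *: comb e (row i M).
Proof.
rewrite /comb; under [RHS]eq_bigr => i _ do rewrite scaler_sumr.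
rewrite exchange_big /=; apply: eq_bigr => j _.
rewrite mxE scaler_suml; apply: eq_bigr => i _.
by rewrite mxE scalerA.
Qed.

Lemma dim_le m k (b : 'I_m -> V) (e : 'I_k -> V) (L : V -> V) :
  lin_indep b -> sproj L ->
  (forall i, exists c : 'rV_k, L (b i) = comb e c) ->
  (forall c : 'rV_m, L (comb b c) = 0 -> comb b c = 0) -> (m <= k)%N.
Proof.
move=> hb hL he hinj.
pose f i := proj1_sig (constructive_indefinite_description _ (he i)).
have hf i : L (b i) = comb e (f i).
  by rewrite /f; case: constructive_indefinite_description.
pose M : 'M_(m, k) := \matrix_(i, j) (f i) 0 j.
have hM i : L (b i) = comb e (row i M).
  rewrite hf; congr comb; apply/rowP => j; by rewrite !mxE.
case: (leqP m k) => // hkm; exfalso.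
have : kermx M != 0.
  rewrite -mxrank_eq0 mxrank_ker subn_eq0 -ltnNge.
  exact: leq_ltn_trans (rank_leq_col M) hkm.
case/rowV0Pn => c /sub_kermxP hc cnz.
have hc0 : comb b c = 0.
  apply: hinj; rewrite /comb sproj_comb //.
  under eq_bigr => i _ do rewrite hM.
  by rewrite -comb_mul hc /comb; apply: big1 => j _; rewrite mxE scale0r.
have := hb (fun i => c 0 i) hc0 => h0.
by move/eqP: cnz; apply; apply/rowP => j; rewrite h0 !mxE.
Qed.


Lemma comb_add k (e : 'I_k -> V) c1 c2 : comb e (c1 + c2) = comb e c1 + comb e c2.
Proof. by rewrite /comb -big_split; apply: eq_bigr => i _; rewrite mxE scalerDl. Qed.

Lemma comb_scale k (e : 'I_k -> V) x c : comb e (x *: c) = x *: comb e c.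
Proof. by rewrite /comb scaler_sumr; apply: eq_bigr => i _; rewrite mxE scalerA. Qed.

Lemma comb0 k (e : 'I_k -> V) : comb e 0 = 0.
Proof. by rewrite /comb big1 // => i _; rewrite mxE scale0r. Qed.

Lemma comb_delta k (e : 'I_k -> V) i : comb e (delta_mx 0 i) = e i.
Proof.
rewrite /comb (bigD1 i) //= big1 ?addr0; first by rewrite mxE !eqxx scale1r.
by move=> j /negbTE ne; rewrite mxE ne andbF scale0r.
Qed.

Lemma comb_uniq k (b : 'I_k -> V) c1 c2 :
  lin_indep b -> comb b c1 = comb b c2 -> c1 = c2.
Proof.
move=> hb h.
have h0 : comb b (c1 + (-1) *: c2) = 0 by rewrite comb_add comb_scale h scaleN1r subrr.
have := hb (fun i => (c1 + (-1) *: c2) 0 i) h0 => hz.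
apply/rowP => j; move: (hz j); rewrite !mxE mulN1r => /eqP.
by rewrite subr_eq0 => /eqP.
Qed.

Lemma comb_fun k (b : 'I_k -> V) (c : 'I_k -> R[i]) :
  \sum_(i < k) c i *: b i = comb b (\row_i c i).
Proof. by rewrite /comb; apply: eq_bigr => i _; rewrite mxE. Qed.

Definition rng (L : V -> V) := fun w : V => exists v, w = L v.

Lemma rng_basis L k : sproj L -> has_dim (rng L) k ->
  exists b : 'I_k -> V, [/\ lin_indep b, (forall i, L (b i) = b i) &
    (forall v, exists c : 'rV_k, L v = comb b c)].
Proof.
move=> hL [b0 [hb hspan]]; exists b0; split => //.
  move=> i; have : rng L (b0 i).
    apply/hspan; exists (fun j => (delta_mx 0 i : 'rV[R[i]]_k) 0 j).
    rewrite comb_fun.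
    have -> : \row_j (delta_mx 0 i : 'rV[R[i]]_k) 0 j = (delta_mx 0 i : 'rV[R[i]]_k).
      by apply/rowP => j; rewrite !mxE.
    by rewrite comb_delta.
  by case=> u ->; case: hL => H1 _; rewrite H1.
move=> v; have : rng L (L v) by exists v.
by case/hspan => c ->; exists (\row_i c i); rewrite comb_fun.
Qed.

Lemma nilp_trace n (E : 'M[R[i]]_n) : E *m E = 0 -> \tr E = 0.
Proof.
move=> hE; have := mulmx_base E; have := col_base_full E.
have := row_base_free E.
move: (col_base E) (row_base E) => C D /row_freeP[D' hD] /row_fullP[C' hC] hCD.
rewrite -hCD mxtrace_mulC; rewrite -hCD in hE.
suff -> : D *m C = 0 by rewrite mxtrace0.
have -> : D *m C = C' *m (C *m D *m (C *m D)) *m D'.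
  by rewrite !mulmxA hC mul1mx -!mulmxA hD mulmx1.
by rewrite hE mulmx0 mul0mx.
Qed.

Lemma lift_op m (g : 'I_m -> V) L k (b : 'I_k -> V) :
  sproj L -> lin_indep b -> (forall i, L (b i) = b i) ->
  (forall v, exists c : 'rV_k, L v = comb b c) ->
  (forall i, exists c : 'rV_m, b i = comb g c) ->
  exists N : 'M_m, [/\ \tr N = k%:R,
    (forall d, comb g (d *m N) = L (comb g d)) &
    (forall d, comb g d = 0 -> d *m N = 0)].
Proof.
move=> hL hb hbb hcov hbg.
pose co v := proj1_sig (constructive_indefinite_description _ (hcov v)).
have hco v : L v = comb b (co v).
  by rewrite /co; case: constructive_indefinite_description.
have co_uniq v c : L v = comb b c -> co v = c.
  by move=> h; apply: (comb_uniq hb); rewrite -hco.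
have co_lin x u v : co (x *: u + v) = x *: co u + co v.
  by apply: co_uniq; rewrite sproj_lin // comb_add comb_scale -!hco.
have co0 : co 0 = 0 by apply: co_uniq; rewrite comb0 (sproj0 hL).
have co_add u v : co (u + v) = co u + co v.
  by have := co_lin 1 u v; rewrite !scale1r.
have co_scale x u : co (x *: u) = x *: co u.
  by rewrite -[x *: u]addr0 co_lin co0 addr0.
have co_comb d : co (comb g d) = \sum_(j < m) d 0 j *: co (g j).
  rewrite /comb (big_morph co co_add co0); apply: eq_bigr => j _.
  by rewrite co_scale.
pose ah i := proj1_sig (constructive_indefinite_description _ (hbg i)).
have hah i : b i = comb g (ah i).
  by rewrite /ah; case: constructive_indefinite_description.
pose A : 'M_(k, m) := \matrix_i ah i.
pose B : 'M_(m, k) := \matrix_j co (g j).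
have key d : d *m B = co (comb g d).
  rewrite mulmx_sum_row co_comb; apply: eq_bigr => j _; by rewrite rowK.
have AB : A *m B = 1%:M.
  apply/row_matrixP => i; rewrite row_mul rowK key -hah row1.
  by apply: co_uniq; rewrite hbb comb_delta.
exists (B *m A); split.
- by rewrite mxtrace_mulC AB mxtrace1.
- move=> d; rewrite mulmxA comb_mul key hco /comb.
  by apply: eq_bigr => i _; rewrite rowK -/(comb g (ah i)) -hah.
- by move=> d hd; rewrite mulmxA key hd co0 mul0mx.
Qed.


Lemma comb_sub k (e : 'I_k -> V) c1 c2 : comb e (c1 - c2) = comb e c1 - comb e c2.
Proof. by rewrite comb_add; have := comb_scale e (-1) c2; rewrite !scaleN1r => ->. Qed.

Definition concat k1 k2 (e1 : 'I_k1 -> V) (e2 : 'I_k2 -> V) : 'I_(k1 + k2) -> V :=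
  fun i => match split i with inl j => e1 j | inr j => e2 j end.

Lemma comb_cat k1 k2 (e1 : 'I_k1 -> V) (e2 : 'I_k2 -> V) c1 c2 :
  comb (concat e1 e2) (row_mx c1 c2) = comb e1 c1 + comb e2 c2.
Proof.
rewrite /comb big_split_ord; congr (_ + _); apply: eq_bigr => i _.
  rewrite row_mxEl /concat.
  by have := unsplitK (inl _ i : 'I_k1 + 'I_k2) => /= ->.
rewrite row_mxEr /concat.
by have := unsplitK (inr _ i : 'I_k1 + 'I_k2) => /= ->.
Qed.

Definition inspan k (e : 'I_k -> V) v := exists c, v = comb e c.

Lemma inspan_catl k1 k2 (e1 : 'I_k1 -> V) (e2 : 'I_k2 -> V) v :
  inspan e1 v -> inspan (concat e1 e2) v.
Proof. by case=> c ->; exists (row_mx c 0); rewrite comb_cat comb0 addr0. Qed.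

Lemma inspan_catr k1 k2 (e1 : 'I_k1 -> V) (e2 : 'I_k2 -> V) v :
  inspan e2 v -> inspan (concat e1 e2) v.
Proof. by case=> c ->; exists (row_mx 0 c); rewrite comb_cat comb0 add0r. Qed.

Lemma inspan_add k (e : 'I_k -> V) u v : inspan e u -> inspan e v -> inspan e (u + v).
Proof. by case=> c1 -> [c2 ->]; exists (c1 + c2); rewrite comb_add. Qed.

Lemma inspan_scale k (e : 'I_k -> V) x v : inspan e v -> inspan e (x *: v).
Proof. by case=> c ->; exists (x *: c); rewrite comb_scale. Qed.

Lemma trace_rel (P Q Rz T : V -> V) p q r t (al be ga : R[i]) :
  sproj P -> sproj Q -> sproj Rz -> sproj T ->
  has_dim (rng P) p -> has_dim (rng Q) q -> has_dim (rng Rz) r ->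
  has_dim (rng T) t ->
  (forall v, T v = al *: P v + be *: Q v + ga *: Rz v) ->
  t%:R = al * p%:R + be * q%:R + ga * r%:R.
Proof.
move=> sP sQ sR sT dP dQ dR dT hT.
have [bP [iP fP cP]] := rng_basis sP dP.
have [bQ [iQ fQ cQ]] := rng_basis sQ dQ.
have [bR [iR fR cR]] := rng_basis sR dR.
have [bT [iT fT cT]] := rng_basis sT dT.
pose g := concat bP (concat bQ bR).
have gP v : inspan g (P v).
  by apply: inspan_catl; have [c ->] := cP v; exists c.
have gQ v : inspan g (Q v).
  by apply/inspan_catr/inspan_catl; have [c ->] := cQ v; exists c.
have gR v : inspan g (Rz v).
  by apply/inspan_catr/inspan_catr; have [c ->] := cR v; exists c.
have gT v : inspan g (T v).
  by rewrite hT; apply: inspan_add; [apply: inspan_add|]; apply: inspan_scale.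
have [NP [trP hP kP]] := lift_op (g:=g) sP iP fP cP (fun i => eq_ind _ (inspan g) (gP (bP i)) _ (fP i)).
have [NQ [trQ hQ kQ]] := lift_op (g:=g) sQ iQ fQ cQ (fun i => eq_ind _ (inspan g) (gQ (bQ i)) _ (fQ i)).
have [NR [trR hR kR]] := lift_op (g:=g) sR iR fR cR (fun i => eq_ind _ (inspan g) (gR (bR i)) _ (fR i)).
have [NT [trT hTT kT]] := lift_op (g:=g) sT iT fT cT (fun i => eq_ind _ (inspan g) (gT (bT i)) _ (fT i)).
pose E := NT - ga *: NR - be *: NQ - al *: NP.
have hE d : comb g (d *m E) = 0.
  rewrite /E !mulmxBr -!scalemxAr !comb_sub !comb_scale hP hQ hR hTT hT.
  by rewrite addrK addrK subrr.
have kE d : comb g d = 0 -> d *m E = 0.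
  move=> hd; rewrite /E !mulmxBr -!scalemxAr kP // kQ // kR // kT //.
  by rewrite !scaler0 !subr0.
have EE : E *m E = 0.
  apply/row_matrixP => i; rewrite row_mul row0; apply: kE.
  by rewrite rowE hE.
have := nilp_trace EE; rewrite /E !raddfB /= !mxtraceZ trP trQ trR trT => h.
apply: (@addIr _ (- (al * p%:R + be * q%:R + ga * r%:R))).
rewrite subrr -h; ring.
Qed.




Lemma nr0 : nr 0 = 0.
Proof. by rewrite /nr ip0l. Qed.

Lemma quad (P Q Rz T : V -> V) (x y z : R) v :
  sproj P -> sproj Q -> sproj Rz -> sproj T ->
  T v = x%:C *: P v + y%:C *: Q v + z%:C *: Rz v ->
  nr (T v) = x * nr (P v) + y * nr (Q v) + z * nr (Rz v).
Proof.
move=> sP sQ sR sT hT.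
have h : ip (T v) v = x%:C * ip (P v) v + y%:C * ip (Q v) v + z%:C * ip (Rz v) v.
  by rewrite hT !ipDl !ipZl.
rewrite !sproj_ipn // !ipE in h.
by move: h; rewrite -!rmorphM -!rmorphD => /complexI.
Qed.

Lemma comb_fix (L : V -> V) k (b : 'I_k -> V) c :
  sproj L -> (forall i, L (b i) = b i) -> L (comb b c) = comb b c.
Proof.
move=> sL fL; rewrite /comb sproj_comb //; apply: eq_bigr => i _; by rewrite fL.
Qed.

Lemma eq_pt (a : R) P Q Rz T p t : 1/2 < a -> a < 1 ->
  sproj P -> sproj Q -> sproj Rz -> sproj T ->
  has_dim (rng P) p -> has_dim (rng T) t ->
  (forall v, T v = a%:C *: P v + a%:C *: Q v + (1 - 2 * a)%:C *: Rz v) ->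
  p = t.
Proof.
move=> ha1 ha2 sP sQ sR sT dP dT hT.
have [bP [iP fP cP]] := rng_basis sP dP.
have [bT [iT fT cT]] := rng_basis sT dT.
apply/eqP; rewrite eqn_leq; apply/andP; split.
- apply: (dim_le iP sT (fun i => cT (bP i))) => c h0.
  move: (comb bP c) (comb_fix c sP fP) h0 => w hPw hTw.
  apply: nr_eq0.
  have hq := quad sP sQ sR sT (hT w).
  rewrite hTw hPw nr0 in hq.
  have h1 := nr_ge0 w; have h2 := nr_ge0 (Q w); have h3 := nr_ge0 (Rz w).
  have h4 := sproj_nr sR w.
  have h5 : 0 <= a * nr (Q w) by apply: mulr_ge0 => //; lra.
  have h6 : 0 <= (2 * a - 1) * (nr w - nr (Rz w)) by apply: mulr_ge0; lra.
  have h7 : (1 - a) * nr w <= 0 by nra.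
  nra.
- apply: (dim_le iT sP (fun i => cP (bT i))) => c h0.
  move: (comb bT c) (comb_fix c sT fT) h0 => w hTw hPw.
  apply: nr_eq0.
  have hq := quad sP sQ sR sT (hT w).
  rewrite hTw hPw nr0 in hq.
  have h1 := nr_ge0 w; have h2 := nr_ge0 (Q w); have h3 := nr_ge0 (Rz w).
  have h4 := sproj_nr sQ w.
  have h5 : 0 <= a * (nr w - nr (Q w)) by apply: mulr_ge0; lra.
  have h6 : 0 <= (2 * a - 1) * nr (Rz w) by apply: mulr_ge0; lra.
  have h7 : (1 - a) * nr w <= 0 by nra.
  nra.
Qed.

Lemma main_lt1 (a : R) P Q Rz T p q r t : 1/2 < a -> a < 1 ->
  sproj P -> sproj Q -> sproj Rz -> sproj T ->
  has_dim (rng P) p -> has_dim (rng Q) q -> has_dim (rng Rz) r ->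
  has_dim (rng T) t ->
  (forall v, T v = a%:C *: P v + a%:C *: Q v + (1 - 2 * a)%:C *: Rz v) ->
  [/\ p = t, q = t & r = t].
Proof.
move=> ha1 ha2 sP sQ sR sT dP dQ dR dT hT.
have ept := eq_pt ha1 ha2 sP sQ sR sT dP dT hT.
have eqt : q = t.
  apply: (eq_pt ha1 ha2 sQ sP sR sT dQ dT) => v.
  by rewrite hT (addrC (a%:C *: P v)).
split => //.
have htr := trace_rel sP sQ sR sT dP dQ dR dT hT.
rewrite ept eqt in htr.
move: htr; rewrite -!(rmorph_nat (real_complex R)) -!rmorphM -!rmorphD => /complexI h.
have h' : (1 - 2 * a) * (r%:R - t%:R) = 0 by lra.
move/eqP: h'; rewrite mulf_eq0 => /orP[/eqP h0|]; first by exfalso; lra.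
by rewrite subr_eq0 eqr_nat => /eqP.
Qed.


Lemma has_dim_ext (A B : V -> Prop) k :
  (forall v, A v <-> B v) -> has_dim A k -> has_dim B k.
Proof. by move=> hAB [b [hb hs]]; exists b; split => // v; rewrite -hAB. Qed.

Lemma span_sub (A : V -> Prop) k u v : has_dim A k -> A u -> A v -> A (u - v).
Proof.
case=> b [_ hs] /hs [c1 ->] /hs [c2 ->]; apply/hs.
exists (fun i => c1 i - c2 i); rewrite !comb_fun -comb_sub; congr comb.
by apply/rowP => i; rewrite !mxE.
Qed.

Lemma orth_sproj (X : V -> Prop) k P :
  has_dim X k -> is_orth_proj ip X P -> sproj P /\ has_dim (rng P) k.
Proof.
move=> hX hP.
have hfix x : X x -> P x = x.
  move=> Xx; have [XPx orth] := hP x.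
  have d0 : ip (x - P x) (x - P x) = 0 := orth _ (span_sub hX Xx XPx).
  by apply/esym/eqP; rewrite -subr_eq0; apply/eqP/ip_eq0.
have sP : sproj P.
  split; first by move=> v; apply: hfix; case: (hP v).
  move=> u v.
  have o1 : ip (P u) (v - P v) = 0.
    by rewrite ipC; have [_ h] := hP v; rewrite h ?conjc0 //; case: (hP u).
  have o2 : ip (u - P u) (P v) = 0.
    by have [_ h] := hP u; rewrite h //; case: (hP v).
  have e1 : v = P v + (v - P v) by rewrite addrC subrK.
  have e2 : u = P u + (u - P u) by rewrite addrC subrK.
  by rewrite {1}e1 {2}e2 ipDr ipDl o1 o2.
split => //; apply: (has_dim_ext _ hX) => w; split.
  by move=> Xw; exists w; rewrite hfix.
by case=> v ->; case: (hP v).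
Qed.

Lemma recomb (A B C : V) (x y z u w s : R[i]) :
  x *: A + y *: B + z *: (u *: A + w *: B + s *: C) =
  (x + z * u) *: A + (y + z * w) *: B + (z * s) *: C.
Proof.
rewrite !scalerDr !scalerA !scalerDl !addrA; congr (_ + _); congr (_ + _).
exact: addrAC.
Qed.

End Basics.



Theorem corollary2p5 (R : realType) (V : lmodType R[i]) (ip : V -> V -> R[i])
    (Hip : is_inner_product ip) (Hcomplete : is_complete ip)
    (a : R) (Ha : 1 / 2 < a) (Ha1 : a != 1)
    (X Y : V -> Prop) (HX : fin_dim_subspace X) (HY : fin_dim_subspace Y)
    (HS : exists Z : V -> Prop, S_a ip a X Y Z) :
  exists k : nat,
    [/\ (exists b : 'I_k -> V, lin_indep b) (* k <= dim H *),
        has_dim X k, has_dim Y k &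
        forall Z : V -> Prop, S_a ip a X Y Z -> has_dim Z k].
Proof.
case: HX => x hx; case: HY => y hy.
have key : forall Z, S_a ip a X Y Z -> x = y /\ has_dim Z x.
  move=> Z [[z hz] [PX [PY [PZ [oX oY oZ [fr1 fr2 [t ht]]]]]]].
  have [sX dX] := orth_sproj Hip hx oX.
  have [sY dY] := orth_sproj Hip hy oY.
  have [sZ dZ] := orth_sproj Hip hz oZ.
  pose T := fun v => a%:C *: (PX v + PY v) + (1 - 2 * a)%:C *: PZ v.
  have sT : sproj ip T by split.
  have dT : has_dim (rng T) t by [].
  have hT v : T v = a%:C *: PX v + a%:C *: PY v + (1 - 2 * a)%:C *: PZ v.
    by rewrite /T scalerDr.
  case: (ltrP a 1) => ha.
    have [e1 e2 e3] := main_lt1 Hip Ha ha sX sY sZ sT dX dY dZ dT hT.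
    by split; [rewrite e1 e2 | rewrite e1 -e3].
  have ha' : 1 < a.
    have : 0 < a - 1 by rewrite lt0r subr_eq0 Ha1 subr_ge0 ha.
    lra.
  pose a' := a / (2 * a - 1).
  have hnz : 2 * a - 1 != 0 by apply/eqP => h0; lra.
  have hmul : a' * (2 * a - 1) = a by rewrite /a' divfK.
  have ha'1 : 1 / 2 < a' by nra.
  have ha'2 : a' < 1 by nra.
  have hZ v : PZ v = a'%:C *: PX v + a'%:C *: PY v + (1 - 2 * a')%:C *: T v.
    rewrite hT recomb -!rmorphM -!rmorphD.
    have c1 : a' + (1 - 2 * a') * a = 0 by rewrite /a'; field.
    have c3 : (1 - 2 * a') * (1 - 2 * a) = 1 by rewrite /a'; field.
    by rewrite c1 c3 rmorph0 rmorph1 !scale0r !add0r scale1r.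
  have [e1 e2 e3] := main_lt1 Hip ha'1 ha'2 sX sY sT sZ dX dY dT dZ hZ.
  by split; [rewrite e1 e2 | rewrite e1].
have [Z0 hZ0] := HS; have [exy _] := key Z0 hZ0.
exists x; split => //.
- by case: hx => b [hb _]; exists b.
- by rewrite exy.
- by move=> Z /key [].
Qed.
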